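(* Let $t_1,t_2:\Sigma^*\to\Omega^*$ be rational partial functions which are not adjacent. Then there are words $x,y,z\in\Sigma^*$ such that $xy^*z\subseteq\mathrm{dom}(t_1)\cap\mathrm{dom}(t_2)$ and $\|t_1(xy^kz),t_2(xy^kz)\|\in\Omega(k)$. In particular, there is a constant $c$ such that for each $k\in\mathbb N$ there exists a word $x\in\mathrm{dom}(t_1)\cap\mathrm{dom}(t_2)$ with $|x|\le c\,k$ (i.e. $|x|\in O(k)$) and $\|t_1(x),t_2(x)\|\ge k$.
   Context: For words $x,y$, $x\wedge y$ is their longest common suffix and $\|x,y\|=|x|+|y|-2|x\wedge y|$. Two partial functions $t_1,t_2$ are adjacent if $\sup\{\|t_1(w),t_2(w)\|:w\in\mathrm{dom}(t_1)\cap\mathrm{dom}(t_2)\}<\infty$, with the convention $\sup\emptyset=-\infty$. A partial function is rational if its graph is a rational subset of $\Sigma^*\times\Omega^*$. *)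

(* Defs.v *)
From mathcomp Require Import all_boot all_order all_algebra.
Set Implicit Arguments. Unset Strict Implicit. Unset Printing Implicit Defensive.

Section Words.
Variables (Sigma Omega : finType).

(* Rational subsets of the monoid Sigma^* x Omega^* (componentwise concatenation):
   the smallest family containing the empty set and singletons, closed under
   union, product and Kleene star (and extensional equality of sets). *)
Definition pair_cat (a b : seq Sigma * seq Omega) : seq Sigma * seq Omega :=
  (a.1 ++ b.1, a.2 ++ b.2).

Definition set_prod (A B : seq Sigma * seq Omega -> Prop) :=
  fun w => exists a b, A a /\ B b /\ w = pair_cat a b.

Inductive set_star (A : seq Sigma * seq Omega -> Prop) :
  seq Sigma * seq Omega -> Prop :=
| star_nil : set_star A ([::], [::])
| star_cons a w : A a -> set_star A w -> set_star A (pair_cat a w).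

Inductive rational_set : (seq Sigma * seq Omega -> Prop) -> Prop :=
| rat_empty : rational_set (fun _ => False)
| rat_single p : rational_set (fun w => w = p)
| rat_union A B : rational_set A -> rational_set B ->
    rational_set (fun w => A w \/ B w)
| rat_prod A B : rational_set A -> rational_set B -> rational_set (set_prod A B)
| rat_star A : rational_set A -> rational_set (set_star A)
| rat_ext A B : rational_set A -> (forall w, A w <-> B w) -> rational_set B.

Definition graph (t : seq Sigma -> option (seq Omega)) :=
  fun w : seq Sigma * seq Omega => t w.1 = Some w.2.

Definition rational_fun (t : seq Sigma -> option (seq Omega)) :=
  rational_set (graph t).

Definition in_dom (t : seq Sigma -> option (seq Omega)) (w : seq Sigma) :=
  t w != None.
End Words.

Section Dist.
Variable T : eqType.

Fixpoint lcp_len (x y : seq T) : nat :=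
  match x, y with
  | a :: x', b :: y' => if a == b then (lcp_len x' y').+1 else 0
  | _, _ => 0
  end.

Definition lcsuffix (x y : seq T) : seq T :=
  rev (take (lcp_len (rev x) (rev y)) (rev x)).

Definition wdist (x y : seq T) : nat :=
  size x + size y - 2 * size (lcsuffix x y).
End Dist.

(* t1, t2 adjacent: sup of ||t1 w, t2 w|| over the common domain is finite
   (sup of the empty set is -oo < oo). *)
Definition adjacent (Sigma Omega : finType)
  (t1 t2 : seq Sigma -> option (seq Omega)) :=
  exists B : nat, forall w u v, t1 w = Some u -> t2 w = Some v ->
    wdist u v <= B.

Definition pump (A : Type) (x y z : seq A) (k : nat) : seq A :=
  x ++ flatten (nseq k y) ++ z.

(* value of ||t1 w, t2 w|| (0 when undefined; only used on the common domain) *)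
Definition dist_at (Sigma Omega : finType)
  (t1 t2 : seq Sigma -> option (seq Omega)) (w : seq Sigma) : nat :=
  match t1 w, t2 w with
  | Some u, Some v => wdist u v
  | _, _ => 0
  end.

(* Main.v *)
Require Import Defs.
From mathcomp Require Import all_boot all_order all_algebra.
Import Order.TTheory GRing.Theory Num.Theory.
Local Open Scope ring_scope.
From mathcomp Require Import zify lra.
From Stdlib Require Import Classical.

Section WordsLemmas.
Local Open Scope nat_scope.
Variable T : eqType.
Implicit Types u v x y a b : seq T.

Definition rep (a : seq T) k := flatten (nseq k a).

Lemma size_rep a k : size (rep a k) = k * size a.
Proof. elim: k => [|k IH] //=. by rewrite /rep /= size_cat -/(rep a k) IH mulSn. Qed.

Lemma rep_S a k : rep a k.+1 = a ++ rep a k. Proof. by []. Qed.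

Lemma rep_Sr a k : rep a k.+1 = rep a k ++ a.
Proof. elim: k => [|k IH]; first by rewrite /rep /= cats0.
by rewrite rep_S {1}IH catA -rep_S. Qed.

Lemma rev_rep a k : rev (rep a k) = rep (rev a) k.
Proof. elim: k => [|k IH] //. by rewrite rep_S rev_cat IH -rep_Sr. Qed.

Lemma lcp_le_l u v : lcp_len u v <= size u.
Proof. elim: u v => [|x u IH] [|y v] //=. case: eqP => // _. exact: IH. Qed.

Lemma lcp_sym u v : lcp_len u v = lcp_len v u.
Proof. elim: u v => [|x u IH] [|y v] //=. rewrite eq_sym. case: eqP => // _. by rewrite IH. Qed.

Lemma lcp_le_r u v : lcp_len u v <= size v.
Proof. rewrite lcp_sym; exact: lcp_le_l. Qed.

Lemma lcp_cat p u v : lcp_len (p ++ u) (p ++ v) = size p + lcp_len u v.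
Proof. elim: p => [|x p IH] //=. by rewrite eqxx IH. Qed.

Lemma lcp_take u v : take (lcp_len u v) u = take (lcp_len u v) v.
Proof. elim: u v => [|x u IH] [|y v] //=. case: eqP => // ->. by rewrite /= IH. Qed.

Lemma lcp_mis u v s t : lcp_len u v < size u -> lcp_len u v < size v ->
  lcp_len (u ++ s) (v ++ t) = lcp_len u v.
Proof.
elim: u v => [|x u IH] [|y v] //=. case: eqP => // _ h1 h2. by rewrite IH.
Qed.

Lemma lcp_full u v : lcp_len u v = size u -> exists r, v = u ++ r.
Proof.
elim: u v => [|x u IH] [|y v] /=; try by eauto.
case: eqP => // -> [] /IH [r ->]. by exists r.
Qed.

Lemma drop_cat_le n u v : n <= size u -> drop n (u ++ v) = drop n u ++ v.
Proof. by move=> h; rewrite drop_cat; case: ltngtP h => // -> _; rewrite subnn drop0 drop_size. Qed.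

Definition dl u v := (drop (lcp_len u v) u, drop (lcp_len u v) v).
Definition pd u v := size (dl u v).1 + size (dl u v).2.

Lemma pdE u v : pd u v = size u + size v - 2 * lcp_len u v.
Proof. rewrite /pd /= !size_drop. have := lcp_le_l u v. have := lcp_le_r u v. lia. Qed.

Lemma dl_cat u v a b : dl (u ++ a) (v ++ b) = dl ((dl u v).1 ++ a) ((dl u v).2 ++ b).
Proof.
rewrite /dl /=.
set L := lcp_len u v.
have eu : u = take L u ++ drop L u by rewrite cat_take_drop.
have ev : v = take L v ++ drop L v by rewrite cat_take_drop.
have sz : size (take L u) = L by rewrite size_take_min; have := lcp_le_l u v; rewrite /L; lia.
have e : lcp_len (u ++ a) (v ++ b) = L + lcp_len (drop L u ++ a) (drop L v ++ b).
  by rewrite {1}eu {1}ev lcp_take -!catA lcp_cat size_take_min; have := lcp_le_r u v; rewrite /L; lia.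
rewrite e addnC -!drop_drop.
by rewrite (drop_cat_le _ _ a (lcp_le_l u v)) (drop_cat_le _ _ b (lcp_le_r u v)).
Qed.

Lemma cat_cancel p x y : p ++ x = p ++ y -> x = y.
Proof. by elim: p => [|c p IH] //= [] /IH. Qed.

Lemma rep_add a m n : rep a (m + n) = rep a m ++ rep a n.
Proof. by rewrite /rep nseqD flatten_cat. Qed.

Lemma dl_sym u v : dl v u = ((dl u v).2, (dl u v).1).
Proof. by rewrite /dl lcp_sym. Qed.

Lemma pd_sym u v : pd u v = pd v u.
Proof. by rewrite /pd dl_sym /= addnC. Qed.

Lemma dl_pre p d : dl (p ++ d) p = (d, [::]).
Proof.
have e : lcp_len (p ++ d) p = size p.
  rewrite -{2}(cats0 p) lcp_cat.
  have -> : lcp_len d [::] = 0 by case: d.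
  by rewrite addn0.
by rewrite /dl e drop_size_cat // drop_size.
Qed.

Definition mism u v := lcp_len u v < size u /\ lcp_len u v < size v.

Lemma mism_exists X X' A B : size A = size B -> size X' <= size X ->
  dl (X ++ A) (X' ++ B) != dl X X' ->
  exists k, mism (X ++ rep A k) (X' ++ rep B k).
Proof.
move=> eAB eX hne.
have Bne : 0 < size B.
  case: A hne eAB => [|a A'] //; case: B => [|b B'] //. by rewrite !cats0 eqxx.
apply: NNPP => hno.
have full : forall k, exists r, X ++ rep A k = X' ++ rep B k ++ r.
  move=> k.
  have nm : ~ mism (X ++ rep A k) (X' ++ rep B k) by move=> h; apply: hno; exists k.
  have l1 := lcp_le_l (X ++ rep A k) (X' ++ rep B k).
  have l2 := lcp_le_r (X ++ rep A k) (X' ++ rep B k).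
  have sz : size (X' ++ rep B k) <= size (X ++ rep A k) by rewrite !size_cat !size_rep eAB; lia.
  have : lcp_len (X' ++ rep B k) (X ++ rep A k) = size (X' ++ rep B k).
    rewrite lcp_sym. rewrite /mism in nm. lia.
  by move=> /lcp_full [r ->]; exists r; rewrite catA.
have [D eD] : exists D, X = X' ++ D.
  have [r] := full 0. rewrite /rep /= !cats0 => ->. by exists r.
have fullD : forall k, exists r, D ++ rep A k = rep B k ++ r.
  move=> k. have [r] := full k. rewrite eD -catA => /cat_cancel e. by exists r.
set k := size D.
have [r1 e1] := fullD k.+1.
have [r0 e0] := fullD k.
set n := size D + size A.
have e2 : D ++ A = take n (rep B k.+1).
  rewrite -(takel_cat r1); last by rewrite size_rep /n /k eAB; nia.
  by rewrite -e1 rep_S catA take_size_cat // size_cat.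
have e3 : B ++ D = take n (rep B k.+1).
  rewrite -(takel_cat r0); last by rewrite size_rep /n /k eAB; nia.
  rewrite rep_S -catA -e0 catA take_size_cat // size_cat /n eAB; lia.
move: hne. rewrite eD -catA e2 -e3 catA !dl_pre. by rewrite eqxx.
Qed.

Lemma comb X X' A B Y Y' : dl (X ++ A) (X' ++ B) != dl X X' ->
  exists K, forall k, k <= pd (X ++ rep A k ++ Y) (X' ++ rep B k ++ Y') + K.
Proof.
move=> hne.
have pdl : forall u v, size u - size v <= pd u v.
  move=> u v; rewrite pdE; have := lcp_le_l u v; have := lcp_le_r u v; lia.
case: (eqVneq (size A) (size B)) => eAB; last first.
  exists (size X + size Y + size X' + size Y') => k.
  case: (ltngtP (size A) (size B)) eAB => // hAB _.
    have := pdl (X' ++ rep B k ++ Y') (X ++ rep A k ++ Y).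
    rewrite pd_sym !size_cat !size_rep.
    have : k * size A + k <= k * size B by nia.
    lia.
  have := pdl (X ++ rep A k ++ Y) (X' ++ rep B k ++ Y').
  rewrite !size_cat !size_rep.
  have : k * size B + k <= k * size A by nia.
  lia.
have Ane : 0 < size A.
  case: A hne eAB => [|a A'] //; case: B => [|b B'] //. by rewrite !cats0 eqxx.
have [k1 [m1 m2]] : exists k1, mism (X ++ rep A k1) (X' ++ rep B k1).
  case: (leqP (size X') (size X)) => hX; first exact: mism_exists.
  have hne' : dl (X' ++ B) (X ++ A) != dl X' X.
    apply: contra hne => /eqP e; apply/eqP.
    by rewrite (dl_sym (X' ++ B)) (dl_sym X') e.
  have [k1 [m1 m2]] := @mism_exists X' X B A (esym eAB) (ltnW hX) hne'.
  by exists k1; rewrite /mism lcp_sym; split.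
set L := lcp_len (X ++ rep A k1) (X' ++ rep B k1).
exists (k1 + 2 * L) => k.
case: (leqP k1 k) => hk; last lia.
have -> : X ++ rep A k ++ Y = (X ++ rep A k1) ++ (rep A (k - k1) ++ Y).
  by rewrite -catA (catA (rep _ k1)) -rep_add subnKC.
have -> : X' ++ rep B k ++ Y' = (X' ++ rep B k1) ++ (rep B (k - k1) ++ Y').
  by rewrite -catA (catA (rep _ k1)) -rep_add subnKC.
rewrite pdE lcp_mis // -/L !size_cat !size_rep.
have : k1 * size A + (k - k1) * size A >= k by nia.
lia.
Qed.

Definition dls u v := (rev (dl (rev u) (rev v)).1, rev (dl (rev u) (rev v)).2).

Lemma dls_cat a u b v : dls (a ++ u) (b ++ v) = dls (a ++ (dls u v).1) (b ++ (dls u v).2).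
Proof. by rewrite /dls !rev_cat !revK [in LHS]dl_cat. Qed.

Lemma wdist_pd u v : wdist u v = pd (rev u) (rev v).
Proof.
rewrite /wdist pdE /lcsuffix size_rev size_take_min !size_rev.
have := lcp_le_l (rev u) (rev v); rewrite size_rev => h.
by rewrite (minn_idPl h).
Qed.

Lemma wdist_dls u v : wdist u v = size (dls u v).1 + size (dls u v).2.
Proof. by rewrite wdist_pd /pd /dls /= !size_rev. Qed.

Lemma comb_s X X' A B Y Y' : dls (A ++ Y) (B ++ Y') != dls Y Y' ->
  exists K, forall k, k <= wdist (X ++ rep A k ++ Y) (X' ++ rep B k ++ Y') + K.
Proof.
move=> hne.
have hne' : dl (rev Y ++ rev A) (rev Y' ++ rev B) != dl (rev Y) (rev Y').
  apply: contra hne => /eqP e; apply/eqP.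
  by rewrite /dls !rev_cat e.
have [K HK] := @comb (rev Y) (rev Y') (rev A) (rev B) (rev X) (rev X') hne'.
exists K => k. rewrite wdist_pd !rev_cat !rev_rep -!catA. exact: HK.
Qed.
End WordsLemmas.


Section Auto.
Local Open Scope nat_scope.
Variables Sigma Omega : finType.

Record aut := Aut {
  ast : finType;
  ainit : ast;
  afin : ast -> Prop;
  astep : ast -> option Sigma -> seq Omega -> ast -> Prop;
  abnd : nat;
  abndP : forall p l o q, astep p l o q -> size o <= abnd }.

Definition ocons (l : option Sigma) (w : seq Sigma) := if l is Some a then a :: w else w.

Inductive run (A : aut) : ast A -> ast A -> seq Sigma -> seq Omega -> Prop :=
| run0 p : run A p p [::] [::]
| runS p l o q r w u : astep A p l o q -> run A q r w u -> run A p r (ocons l w) (o ++ u).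

Definition accepts (A : aut) (x : seq Sigma * seq Omega) :=
  exists q, afin A q /\ run A (ainit A) q x.1 x.2.
Definition recog (X : seq Sigma * seq Omega -> Prop) :=
  exists A, forall x, X x <-> accepts A x.

Lemma run_cat A p q r w u w' u' : run A p q w u -> run A q r w' u' ->
  run A p r (w ++ w') (u ++ u').
Proof.
elim=> [//|p0 l o q0 r0 w0 u0 hs _ IH] h.
have -> : ocons l w0 ++ w' = ocons l (w0 ++ w') by case: l {hs}.
rewrite -catA. exact: runS hs (IH h).
Qed.

Lemma run_map (A B : aut) (f : ast A -> ast B) :
  (forall p l o q, astep A p l o q -> astep B (f p) l o (f q)) ->
  forall p q w u, run A p q w u -> run B (f p) (f q) w u.
Proof.
move=> hf p q w u; elim=> [p0|p0 l o q0 r0 w0 u0 hs _ IH]; first exact: run0.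
exact: runS (hf _ _ _ _ hs) IH.
Qed.

Lemma recog_ext X Y : recog X -> (forall x, X x <-> Y x) -> recog Y.
Proof. move=> [A HA] e; exists A => x; rewrite -e; exact: HA. Qed.

Section Atom.
Variables (l : option Sigma) (o : seq Omega).
Definition atom_step (p : bool) l' o' (q : bool) := p = false /\ q = true /\ l' = l /\ o' = o.
Lemma atom_bnd p l' o' q : atom_step p l' o' q -> size o' <= size o.
Proof. by move=> [_ [_ [_ ->]]]. Qed.
Definition atom := @Aut bool false (fun q => q = true) atom_step (size o) atom_bnd.

Lemma recog_atom : recog (fun x => x = (ocons l [::], o)).
Proof.
exists atom => -[w u] /=; split.
  move=> [-> ->]; exists true; split => //=.
  rewrite -(cats0 o). apply: (@runS atom false l o true true [::] [::]) => //.
  exact: run0.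
move=> [q [/= -> h]].
have key : forall p q w u, run atom p q w u -> q = true ->
  (p = true /\ w = [::] /\ u = [::]) \/ (p = false /\ w = ocons l [::] /\ u = o).
  move=> p0 q0 w0 u0; elim=> [p1 ->|p1 l1 o1 q1 r1 w1 u1 [-> [-> [-> ->]]] _ IH /IH].
    by left.
  by case=> [[_ [-> ->]]|[//]]; right; rewrite cats0.
by case: (key _ _ _ _ h erefl) => [[//]|[_ [-> ->]]].
Qed.
End Atom.


Section Union.
Variables A B : aut.
Definition U_st := option (ast A + ast B).
Definition ustep (p : U_st) l o (q : U_st) : Prop :=
  match p, q with
  | None, Some (inl q1) => l = None /\ o = [::] /\ q1 = ainit A
  | None, Some (inr q2) => l = None /\ o = [::] /\ q2 = ainit B
  | Some (inl p1), Some (inl q1) => astep A p1 l o q1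
  | Some (inr p2), Some (inr q2) => astep B p2 l o q2
  | _, _ => False
  end.
Lemma ubnd p l o q : ustep p l o q -> size o <= maxn (abnd A) (abnd B).
Proof.
case: p => [[p|p]|]; case: q => [[q|q]|] //=.
- move/abndP => h; apply: leq_trans h _; exact: leq_maxl.
- move/abndP => h; apply: leq_trans h _; exact: leq_maxr.
- by move=> [_ [-> _]].
- by move=> [_ [-> _]].
Qed.
Definition ufin (q : U_st) := match q with Some (inl q1) => afin A q1 | Some (inr q2) => afin B q2 | None => False end.
Definition uaut := @Aut U_st None ufin ustep _ ubnd.

Lemma urun_l s t w u : run uaut s t w u -> forall p, s = Some (inl p) ->
  exists q, t = Some (inl q) /\ run A p q w u.
Proof.
elim=> [p0 p ->|p0 l o q0 r0 w0 u0 hs _ IH p ep]; first by exists p; split => //; exact: run0.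
subst p0. case: q0 hs IH => [[q1|q1]|] //= hs IH.
have [q [-> hr]] := IH q1 erefl. exists q; split => //. exact: runS hs hr.
Qed.

Lemma urun_r s t w u : run uaut s t w u -> forall p, s = Some (inr p) ->
  exists q, t = Some (inr q) /\ run B p q w u.
Proof.
elim=> [p0 p ->|p0 l o q0 r0 w0 u0 hs _ IH p ep]; first by exists p; split => //; exact: run0.
subst p0. case: q0 hs IH => [[q1|q1]|] //= hs IH.
have [q [-> hr]] := IH q1 erefl. exists q; split => //. exact: runS hs hr.
Qed.

Lemma accepts_union x : accepts uaut x <-> accepts A x \/ accepts B x.
Proof.
split.
  have key : forall s t w u, run uaut s t w u -> ufin t -> s = None ->
      accepts A (w, u) \/ accepts B (w, u).
    move=> s t w u; case=> [p0 ft ep|p0 l o q0 r0 w0 u0 hs hr ft ep]; first by subst p0.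
    subst p0. case: q0 hs hr => [[q1|q1]|] //= [-> [-> ->]] hr.
      have [q [eq hq]] := @urun_l _ _ _ _ hr _ erefl. subst r0. left. by exists q.
    have [q [eq hq]] := @urun_r _ _ _ _ hr _ erefl. subst r0. right. by exists q.
  move=> [t [ft h]]. have := key _ _ _ _ h ft erefl. by case: x {h}.
case=> [[q [fq h]]|[q [fq h]]].
  exists (Some (inl q)); split => //.
  rewrite -[x.1]/(ocons None x.1) -[x.2]/([::] ++ x.2).
  apply: (@runS uaut None None [::] (Some (inl (ainit A)))) => //.
  exact: (@run_map A uaut (fun p => Some (inl p)) (fun _ _ _ _ h => h) _ _ _ _ h).
exists (Some (inr q)); split => //.
rewrite -[x.1]/(ocons None x.1) -[x.2]/([::] ++ x.2).
apply: (@runS uaut None None [::] (Some (inr (ainit B)))) => //.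
exact: (@run_map B uaut (fun p => Some (inr p)) (fun _ _ _ _ h => h) _ _ _ _ h).
Qed.
End Union.

Lemma recog_union X Y : recog X -> recog Y -> recog (fun w => X w \/ Y w).
Proof.
move=> [A HA] [B HB]; exists (uaut A B) => x.
by rewrite accepts_union HA HB.
Qed.


Section Prod.
Variables A B : aut.
Definition P_st := (ast A + ast B)%type.
Definition cstep (p : P_st) l o (q : P_st) : Prop :=
  match p, q with
  | inl p1, inl q1 => astep A p1 l o q1
  | inr p2, inr q2 => astep B p2 l o q2
  | inl p1, inr q2 => afin A p1 /\ q2 = ainit B /\ l = None /\ o = [::]
  | _, _ => False
  end.
Lemma cbnd p l o q : cstep p l o q -> size o <= maxn (abnd A) (abnd B).
Proof.
case: p => [p|p]; case: q => [q|q] //=.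
- move/abndP => h; apply: leq_trans h _; exact: leq_maxl.
- by move=> [_ [_ [_ ->]]].
- move/abndP => h; apply: leq_trans h _; exact: leq_maxr.
Qed.
Definition cfin (q : P_st) := match q with inr q2 => afin B q2 | inl _ => False end.
Definition caut := @Aut P_st (inl (ainit A)) cfin cstep _ cbnd.

Lemma crun_r s t w u : run caut s t w u -> forall p, s = inr p ->
  exists q, t = inr q /\ run B p q w u.
Proof.
elim=> [p0 p ->|p0 l o q0 r0 w0 u0 hs _ IH p ep]; first by exists p; split => //; exact: run0.
subst p0. case: q0 hs IH => [q1|q1] //= hs IH.
have [q [-> hr]] := IH q1 erefl. exists q; split => //. exact: runS hs hr.
Qed.

Lemma crun_l s t w u : run caut s t w u -> forall p, s = inl p -> forall q, t = inr q ->
  exists p' w1 u1 w2 u2, [/\ afin A p', run A p p' w1 u1, run B (ainit B) q w2 u2,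
     w = w1 ++ w2 & u = u1 ++ u2].
Proof.
elim=> [p0 p -> q //|p0 l o q0 r0 w0 u0 hs hr IH p ep q eq].
subst p0 r0. case: q0 hs hr IH => [q1|q1] //= hs hr IH.
  have [p' [w1 [u1 [w2 [u2 [f1 r1 r2 -> ->]]]]]] := IH q1 erefl q erefl.
  exists p', (ocons l w1), (o ++ u1), w2, u2; split => //.
  - exact: runS hs r1.
  - by case: l {hs}.
  - by rewrite catA.
move: hs => [f1 [eq1 [-> ->]]]; subst q1.
have [q' [[<-] hq]] := @crun_r _ _ _ _ hr _ erefl.
exists p, [::], [::], w0, u0; split => //. exact: run0.
Qed.

Lemma accepts_prod x : accepts caut x <-> set_prod (accepts A) (accepts B) x.
Proof.
split.
  move=> [q [fq h]]; case: q fq h => // q fq h.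
  have [p' [w1 [u1 [w2 [u2 [f1 r1 r2 e1 e2]]]]]] := @crun_l _ _ _ _ h _ erefl _ erefl.
  exists (w1, u1), (w2, u2); split; first by exists p'.
  split; first by exists q.
  by case: x e1 e2 {h} => /= ? ? -> ->.
move=> [[w1 u1] [[w2 u2] [[p1 [f1 r1]] [[q [fq r2]] ->]]]].
exists (inr q); split => //=.
apply: (@run_cat caut _ (inl p1)).
  exact: (@run_map A caut inl (fun _ _ _ _ h => h) _ _ _ _ r1).
rewrite -[w2]/(ocons None w2) -[u2]/([::] ++ u2).
apply: (@runS caut _ None [::] (inr (ainit B))) => //.
exact: (@run_map B caut inr (fun _ _ _ _ h => h) _ _ _ _ r2).
Qed.
End Prod.

Lemma recog_prod X Y : recog X -> recog Y -> recog (set_prod X Y).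
Proof.
move=> [A HA] [B HB]; exists (caut A B) => x.
rewrite accepts_prod /set_prod.
split=> [[a [b [xa [yb e]]]]|[a [b [xa [yb e]]]]]; exists a, b; split; try split => //;
  by [apply/HA|apply/HA|apply/HB|apply/HB].
Qed.


Section Star.
Variable A : aut.
Definition S_st := option (ast A).
Definition sstep (p : S_st) l o (q : S_st) : Prop :=
  match p, q with
  | None, Some q1 => l = None /\ o = [::] /\ q1 = ainit A
  | Some p1, Some q1 => astep A p1 l o q1
  | Some p1, None => afin A p1 /\ l = None /\ o = [::]
  | None, None => False
  end.
Lemma sbnd p l o q : sstep p l o q -> size o <= abnd A.
Proof.
case: p => [p|]; case: q => [q|] //=.
- exact: abndP.
- by move=> [_ [_ ->]].
- by move=> [_ [-> _]].
Qed.
Definition sfin (q : S_st) := q = None.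
Definition saut := @Aut S_st None sfin sstep _ sbnd.

Lemma srun s t w u : run saut s t w u -> t = None ->
  (s = None -> set_star (accepts A) (w, u)) /\
  (forall p, s = Some p -> exists p' w1 u1 w2 u2, [/\ afin A p', run A p p' w1 u1,
     set_star (accepts A) (w2, u2), w = w1 ++ w2 & u = u1 ++ u2]).
Proof.
elim=> [p0 ->|p0 l o q0 r0 w0 u0 hs hr IH et].
  split=> [_|p //]. exact: star_nil.
have [IH1 IH2] := IH et. clear IH.
split.
  move=> ep; subst p0. case: q0 hs hr IH1 IH2 => [q1|] //= [-> [-> ->]] hr IH1 IH2.
  have [p' [w1 [u1 [w2 [u2 [f1 r1 st -> ->]]]]]] := IH2 _ erefl.
  have -> : (w1 ++ w2, u1 ++ u2) = pair_cat (w1, u1) (w2, u2) by [].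
  apply: star_cons => //. by exists p'.
move=> p ep; subst p0. case: q0 hs hr IH1 IH2 => [q1|] //= hs hr IH1 IH2.
  have [p' [w1 [u1 [w2 [u2 [f1 r1 st -> ->]]]]]] := IH2 _ erefl.
  exists p', (ocons l w1), (o ++ u1), w2, u2; split => //.
  - exact: runS hs r1.
  - by case: l {hs}.
  - by rewrite catA.
move: hs => [f1 [-> ->]].
exists p, [::], [::], w0, u0; split => //; [exact: run0 | exact: IH1].
Qed.

Lemma accepts_star x : accepts saut x <-> set_star (accepts A) x.
Proof.
split.
  move=> [q [fq h]]. rewrite /= /sfin in fq. subst q.
  have [H1 _] := @srun _ _ _ _ h erefl. case: x H1 {h} => ? ? H1. exact: H1.
elim=> [|a w [p1 [f1 r1]] _ [q [fq IH]]].
  exists None; split => //. exact: run0.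
exists None; split => //. rewrite /= /sfin in fq. subst q.
rewrite /pair_cat /=.
rewrite -[a.1 ++ w.1]/(ocons None (a.1 ++ w.1)) -[a.2 ++ w.2]/([::] ++ (a.2 ++ w.2)).
apply: (@runS saut _ None [::] (Some (ainit A))) => //.
apply: (@run_cat saut _ (Some p1)).
  exact: (@run_map A saut Some (fun _ _ _ _ h => h) _ _ _ _ r1).
rewrite -[w.1]/(ocons None w.1) -[w.2]/([::] ++ w.2).
exact: (@runS saut _ None [::] None).
Qed.
End Star.

Lemma recog_star X : recog X -> recog (set_star X).
Proof.
move=> [A HA]; exists (saut A) => x.
rewrite accepts_star.
have e : forall Y Z : seq Sigma * seq Omega -> Prop, (forall y, Y y <-> Z y) -> forall y, set_star Y y -> set_star Z y.
  move=> Y Z eYZ y hy; induction hy as [|a w ya _ IH]; first exact: star_nil.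
  exact: star_cons (proj1 (eYZ a) ya) IH.
split; [apply: e; exact: HA|apply: e => y; exact: iff_sym (HA y)].
Qed.

Lemma recog_empty : recog (fun _ => False).
Proof.
exists (@Aut bool false (fun _ => False) (atom_step None [::]) 0 (@atom_bnd None [::])).
by move=> x; split => // [[q []]].
Qed.

Lemma recog_single p : recog (fun w => w = p).
Proof.
case: p => w o. elim: w => [|a w IH].
  exact: (recog_atom None o).
apply: (recog_ext _ _ (recog_prod _ _ (recog_atom (Some a) [::]) IH)) => x.
split.
  by move=> [b [c [-> [-> ->]]]].
move=> ->. by exists ([:: a], [::]), (w, o).
Qed.

Lemma kleene X : rational_set X -> recog X.
Proof.
elim=> [|p|A B _ hA _ hB|A B _ hA _ hB|A _ hA|A B _ hA e].
- exact: recog_empty.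
- exact: recog_single.
- exact: recog_union.
- exact: recog_prod.
- exact: recog_star.
- exact: recog_ext hA e.
Qed.

End Auto.


Arguments ocons {Sigma}.
Arguments run {Sigma Omega}.
Arguments accepts {Sigma Omega}.
Arguments astep {Sigma Omega}.
Arguments ainit {Sigma Omega}.
Arguments ast {Sigma Omega}.
Arguments afin {Sigma Omega}.
Arguments abnd {Sigma Omega}.
Arguments abndP {Sigma Omega}.
Arguments rep {T}.
Arguments dls {T}.

Set Implicit Arguments.
Unset Strict Implicit.

Section Joint.
Local Open Scope nat_scope.
Variables Sigma Omega : finType.
Variables A1 A2 : aut Sigma Omega.
Definition J := (ast A1 * ast A2)%type.

Inductive jstep : J -> option Sigma -> seq Omega -> seq Omega -> J -> Prop :=
| jboth p1 p2 q1 q2 a o1 o2 : astep A1 p1 (Some a) o1 q1 -> astep A2 p2 (Some a) o2 q2 ->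
    jstep (p1, p2) (Some a) o1 o2 (q1, q2)
| jleft p1 p2 q1 o1 : astep A1 p1 None o1 q1 -> jstep (p1, p2) None o1 [::] (q1, p2)
| jright p1 p2 q2 o2 : astep A2 p2 None o2 q2 -> jstep (p1, p2) None [::] o2 (p1, q2).

Inductive jrun : J -> J -> seq J -> seq Sigma -> seq Omega -> seq Omega -> Prop :=
| jrun0 p : jrun p p [::] [::] [::] [::]
| jrunS p l o1 o2 q r ss w u v : jstep p l o1 o2 q -> jrun q r ss w u v ->
    jrun p r (q :: ss) (ocons l w) (o1 ++ u) (o2 ++ v).

Lemma ocons_cat l (w w' : seq Sigma) : ocons l w ++ w' = ocons l (w ++ w').
Proof. by case: l. Qed.

Lemma jrun_cat p q r ss w u v ss' w' u' v' : jrun p q ss w u v -> jrun q r ss' w' u' v' ->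
  jrun p r (ss ++ ss') (w ++ w') (u ++ u') (v ++ v').
Proof.
elim=> [//|p0 l o1 o2 q0 r0 ss0 w0 u0 v0 hs _ IH] h.
rewrite ocons_cat -!catA /=. exact: jrunS hs (IH h).
Qed.

Lemma jrun_sound p q ss w u v : jrun p q ss w u v -> run A1 p.1 q.1 w u /\ run A2 p.2 q.2 w v.
Proof.
elim=> [p0|p0 l o1 o2 q0 r0 ss0 w0 u0 v0 hs _ [IH1 IH2]]; first by split; exact: run0.
case: hs IH1 IH2 => [p1 p2 q1 q2 a o1' o2' h1 h2|p1 p2 q1 o1' h1|p1 p2 q2 o2' h2] /= IH1 IH2.
- split; [exact: runS h1 IH1 | exact: runS h2 IH2].
- split; [exact: runS h1 IH1 | exact: IH2].
- split; [exact: IH1 | exact: runS h2 IH2].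
Qed.

Lemma jrun_eps p1 p2 q2 v : run A2 p2 q2 [::] v -> exists ss, jrun (p1, p2) (p1, q2) ss [::] [::] v.
Proof.
move=> h. have : forall w, run A2 p2 q2 w v -> w = [::] -> exists ss, jrun (p1, p2) (p1, q2) ss [::] [::] v.
  move=> w {h}; elim=> [p0 _|p0 l o q0 r0 w0 u0 hs _ IH e].
    exists [::]; exact: jrun0.
  case: l hs e => //= hs e. subst w0.
  have [ss hss] := IH erefl. exists ((p1, q0) :: ss).
  exact (jrunS (jright p1 hs) hss).
by move/(_ _ h erefl).
Qed.

Lemma jrun_complete p1 q1 w u : run A1 p1 q1 w u -> forall p2 q2 v, run A2 p2 q2 w v ->
  exists ss, jrun (p1, p2) (q1, q2) ss w u v.
Proof.
elim=> [p0|p0 l o q0 r0 w0 u0 hs _ IH] p2 q2 v h2.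
  have [ss hss] := jrun_eps p0 h2. by exists ss.
case: l hs h2 => [a|] hs h2; last first.
  have [ss hss] := IH _ _ _ h2. exists ((q0, p2) :: ss).
  rewrite -[v]/([::] ++ v). exact: jrunS (jleft _ hs) hss.
(* letter step in A1: walk A2 through eps steps until its letter step *)
have : forall p2' W, run A2 p2' q2 W v -> W = a :: w0 ->
    exists ss, jrun (p0, p2') (r0, q2) ss (a :: w0) (o ++ u0) v.
  move=> p2' W {h2}; elim=> [//|p3 l' o' q3 r3 w3 u3 hs' hr' IH' e].
  case: l' hs' e => [b|] /= hs' e.
    case: e => eb ew; subst b w3.
    have [ss hss] := IH _ _ _ hr'. exists ((q0, q3) :: ss).
    rewrite -[a :: w0]/(ocons (Some a) w0). exact: jrunS (jboth hs hs') hss.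
  have [ss hss] := IH' e. exists ((p0, q3) :: ss).
  rewrite -[a :: w0]/(ocons None (a :: w0)) -[o ++ u0]/([::] ++ (o ++ u0)).
  exact: jrunS (jright _ hs') hss.
by move/(_ _ _ h2 erefl).
Qed.

Lemma jrun_split p r ss w u v : jrun p r ss w u v -> forall s, s \in p :: ss ->
  exists ss1 ss2 w1 w2 u1 u2 v1 v2, [/\ jrun p s ss1 w1 u1 v1, jrun s r ss2 w2 u2 v2,
    size ss1 + size ss2 = size ss, w = w1 ++ w2 & u = u1 ++ u2 /\ v = v1 ++ v2].
Proof.
elim=> [p0|p0 l o1 o2 q0 r0 ss0 w0 u0 v0 hs hr IH] s.
  rewrite inE => /eqP ->. exists [::], [::], [::], [::], [::], [::], [::], [::].
  by split => //; exact: jrun0.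
rewrite in_cons; case: eqP => [-> _|_ /= hin].
  exists [::], (q0 :: ss0), [::], (ocons l w0), [::], (o1 ++ u0), [::], (o2 ++ v0).
  split => //; [exact: jrun0 | exact: jrunS hs hr].
have [ss1 [ss2 [w1 [w2 [u1 [u2 [v1 [v2 [h1 h2 hsz -> [-> ->]]]]]]]]]] := IH s hin.
exists (q0 :: ss1), ss2, (ocons l w1), w2, (o1 ++ u1), u2, (o2 ++ v1), v2.
split => //=.
- exact: jrunS hs h1.
- by rewrite addSn hsz.
- by rewrite ocons_cat.
- by rewrite !catA.
Qed.

Lemma jrun_loop p r ss w u v : jrun p r ss w u v -> ~~ uniq (p :: ss) ->
  exists s ssa ssb ssc wa wb wc ua ub uc va vb vc,
    [/\ jrun p s ssa wa ua va, jrun s s ssb wb ub vb, jrun s r ssc wc uc vc,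
        size ssa + size ssc < size ss &
        [/\ w = wa ++ wb ++ wc, u = ua ++ ub ++ uc & v = va ++ vb ++ vc]].
Proof.
elim=> [p0 //|p0 l o1 o2 q0 r0 ss0 w0 u0 v0 hs hr IH].
rewrite cons_uniq negb_and negbK; case/orP => [hin|hnu].
  have [ss1 [ss2 [w1 [w2 [u1 [u2 [v1 [v2 [h1 h2 hsz -> [-> ->]]]]]]]]]] := jrun_split hr hin.
  exists p0, [::], (q0 :: ss1), ss2, [::], (ocons l w1), w2, [::], (o1 ++ u1), u2, [::], (o2 ++ v1), v2.
  split => //=.
  - exact: jrun0.
  - exact: jrunS hs h1.
  - by rewrite -hsz; lia.
  - by split; rewrite ?ocons_cat ?catA.
have [s [ssa [ssb [ssc [wa [wb [wc [ua [ub [uc [va [vb [vc [ha hb hc hsz [-> -> ->]]]]]]]]]]]]]]] := IH hnu.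
exists s, (q0 :: ssa), ssb, ssc, (ocons l wa), wb, wc, (o1 ++ ua), ub, uc, (o2 ++ va), vb, vc.
split => //=.
- exact: jrunS hs ha.
- by split; rewrite ?ocons_cat ?catA.
Qed.

Definition jB := maxn (abnd A1) (abnd A2).

Lemma jstep_bnd p l o1 o2 q : jstep p l o1 o2 q -> size o1 <= jB /\ size o2 <= jB.
Proof.
case=> [p1 p2 q1 q2 a o1' o2' h1 h2|p1 p2 q1 o1' h1|p1 p2 q2 o2' h2]; rewrite /jB.
- split; [apply: leq_trans (abndP _ _ _ _ _ h1) (leq_maxl _ _)|apply: leq_trans (abndP _ _ _ _ _ h2) (leq_maxr _ _)].
- split => //; apply: leq_trans (abndP _ _ _ _ _ h1) (leq_maxl _ _).
- split => //; apply: leq_trans (abndP _ _ _ _ _ h2) (leq_maxr _ _).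
Qed.

Lemma jrun_size p q ss w u v : jrun p q ss w u v -> size u <= size ss * jB /\ size v <= size ss * jB.
Proof.
elim=> [//|p0 l o1 o2 q0 r0 ss0 w0 u0 v0 hs _ [IH1 IH2]].
have [b1 b2] := jstep_bnd hs.
rewrite /= !size_cat mulSn; split; lia.
Qed.

Lemma jrun_pump s ss w u v : jrun s s ss w u v -> forall k, exists ss',
  jrun s s ss' (rep w k) (rep u k) (rep v k).
Proof.
move=> h; elim=> [|k [ss' IH]]; first by exists [::]; exact: jrun0.
exists (ss ++ ss'). rewrite !(@rep_S _ _ k). exact: jrun_cat h IH.
Qed.

Definition jinit : J := (ainit A1, ainit A2).
Definition jfin (f : J) := afin A1 f.1 /\ afin A2 f.2.

Definition INV := forall s ss1 w1 u1 v1 ss2 w2 u2 v2 f ss3 w3 u3 v3,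
  jrun jinit s ss1 w1 u1 v1 -> jrun s s ss2 w2 u2 v2 -> jrun s f ss3 w3 u3 v3 -> jfin f ->
  dls (u2 ++ u3) (v2 ++ v3) = dls u3 v3.

Lemma card_bound (s : J) ss : uniq (s :: ss) -> size ss < #|{: J}|.
Proof. move=> /card_uniqP h. have := max_card (mem (s :: ss)). by rewrite h. Qed.

Lemma short_runs : INV -> forall n ss s f w u v ss0 w0 u0 v0, size ss <= n ->
  jrun jinit s ss0 w0 u0 v0 -> jrun s f ss w u v -> jfin f ->
  exists ss' w' u' v', [/\ jrun s f ss' w' u' v', size ss' < #|{: J}| & dls u' v' = dls u v].
Proof.
move=> inv; elim=> [|n IH] ss s f w u v ss0 w0 u0 v0 hn h0 h hf.
  have e : ss = [::] by case: ss hn {h}.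
  subst ss. exists [::], w, u, v; split => //. by apply/card_gt0P; exists s.
case: (boolP (uniq (s :: ss))) => hu.
  exists ss, w, u, v; split => //. exact: card_bound hu.
have [x [ssa [ssb [ssc [wa [wb [wc [ua [ub [uc [va [vb [vc [ha hb hc hsz [ew eu ev]]]]]]]]]]]]]]] := jrun_loop h hu.
have hac := jrun_cat ha hc.
have hn' : size (ssa ++ ssc) <= n by rewrite size_cat; lia.
have [ss' [w' [u' [v' [h' hs' hd']]]]] := IH _ _ _ _ _ _ _ _ _ _ hn' h0 hac hf.
exists ss', w', u', v'; split => //.
rewrite hd' eu ev [RHS]dls_cat (inv _ _ _ _ _ _ _ _ _ _ _ _ _ _ (jrun_cat h0 ha) hb hc hf).
by rewrite -dls_cat.
Qed.


Lemma dls_size (u v : seq Omega) : size (dls u v).1 <= size u /\ size (dls u v).2 <= size v.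
Proof. by rewrite /dls /= !size_rev !size_drop !size_rev; split; apply: leq_subr. Qed.

Lemma bounded : INV -> forall f ss w u v, jrun jinit f ss w u v -> jfin f ->
  wdist u v <= 2 * (#|{: J}| * jB).
Proof.
move=> inv f ss w u v h hf.
have [ss' [w' [u' [v' [h' hs' hd']]]]] :=
  short_runs inv (leqnn (size ss)) (jrun0 jinit) h hf.
rewrite wdist_dls -hd'.
have [d1 d2] := dls_size u' v'.
have [s1 s2] := jrun_size h'.
have : size ss' * jB <= #|{: J}| * jB by rewrite leq_mul2r ltnW ?orbT.
lia.
Qed.

Definition BAD := exists s ss1 w1 u1 v1 ss2 w2 u2 v2 f ss3 w3 u3 v3,
  [/\ jrun jinit s ss1 w1 u1 v1, jrun s s ss2 w2 u2 v2, jrun s f ss3 w3 u3 v3, jfin f &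
   dls (u2 ++ u3) (v2 ++ v3) != dls u3 v3].

End Joint.

Section MainGen.
Local Open Scope nat_scope.

Lemma main_gen (Sigma Omega : finType) (t1 t2 : seq Sigma -> option (seq Omega))
  (A1 A2 : aut Sigma Omega) :
  (forall x, graph t1 x <-> accepts A1 x) -> (forall x, graph t2 x <-> accepts A2 x) ->
  ~ adjacent t1 t2 ->
  exists x y z K, forall k, [/\ t1 (pump x y z k) != None, t2 (pump x y z k) != None &
     (k <= dist_at t1 t2 (pump x y z k) + K)%N].
Proof.
move=> H1 H2 nadj.
case: (classic (BAD A1 A2)) => hbad.
  move: hbad => [s [ss1 [w1 [u1 [v1 [ss2 [w2 [u2 [v2 [f [ss3 [w3 [u3 [v3 [h1 h2 h3 [hf1 hf2] hne]]]]]]]]]]]]]]].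
  have [K HK] := @comb_s _ u1 v1 u2 v2 u3 v3 hne.
  exists w1, w2, w3, K => k.
  have [ss' hp] := jrun_pump h2 k.
  have [r1 r2] := jrun_sound (jrun_cat h1 (jrun_cat hp h3)).
  have e1 : t1 (pump w1 w2 w3 k) = Some (u1 ++ rep u2 k ++ u3).
    have : graph t1 (pump w1 w2 w3 k, u1 ++ rep u2 k ++ u3) by apply/H1; exists f.1.
    by [].
  have e2 : t2 (pump w1 w2 w3 k) = Some (v1 ++ rep v2 k ++ v3).
    have : graph t2 (pump w1 w2 w3 k, v1 ++ rep v2 k ++ v3) by apply/H2; exists f.2.
    by [].
  by rewrite /dist_at e1 e2; split => //; exact: HK.
exfalso; apply: nadj.
have inv : INV A1 A2.
  move=> s ss1 w1 u1 v1 ss2 w2 u2 v2 f ss3 w3 u3 v3 h1 h2 h3 hf.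
  case: (eqVneq (dls (u2 ++ u3) (v2 ++ v3)) (dls u3 v3)) => // hne. exfalso; apply: hbad.
  by exists s, ss1, w1, u1, v1, ss2, w2, u2, v2, f, ss3, w3, u3, v3.
exists (2 * (#|{: J A1 A2}| * jB A1 A2)) => w u v e1 e2.
have [q1 [f1 r1]] : accepts A1 (w, u) by apply/H1.
have [q2 [f2 r2]] : accepts A2 (w, v) by apply/H2.
have [ss h] := jrun_complete r1 r2.
exact: (bounded inv (f := (q1, q2)) h (conj f1 f2)).
Qed.

End MainGen.

Unset Implicit Arguments.
Unset Strict Implicit.

Theorem lemma21 (Sigma Omega : finType)
  (t1 t2 : seq Sigma -> option (seq Omega)) :
  rational_fun t1 -> rational_fun t2 -> ~ adjacent t1 t2 ->
  (exists x y z : seq Sigma,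
      (forall k : nat, in_dom t1 (pump x y z k) /\ in_dom t2 (pump x y z k)) /\
      (exists (c : rat) (k0 : nat), 0 < c /\
         forall k : nat, (k0 <= k)%N ->
           c * k%:R <= (dist_at t1 t2 (pump x y z k))%:R))
  /\
  (exists c d : nat, forall k : nat, exists w : seq Sigma,
      [/\ in_dom t1 w, in_dom t2 w, (size w <= c * k + d)%N
        & (k <= dist_at t1 t2 w)%N]).
Proof.
move=> r1 r2 nadj.
have [A1 H1] := @kleene _ _ _ r1.
have [A2 H2] := @kleene _ _ _ r2.
have [x [y [z [K HK]]]] := main_gen H1 H2 nadj.
split.
  exists x, y, z; split.
    by move=> k; have [a b _] := HK k.
  exists (2^-1), (2 * K)%N; split; first by [].
  move=> k hk.
  have [_ _ hd] := HK k.
  have h2 : (k <= 2 * dist_at t1 t2 (pump x y z k))%N by lia.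
  have : (k%:R : rat) <= 2 * (dist_at t1 t2 (pump x y z k))%:R.
    by rewrite -natrM ler_nat.
  lra.
exists (size y), (size x + size z + K * size y)%N => k.
have [a b hd] := HK (k + K)%N.
exists (pump x y z (k + K)); split => //.
  have hs : size (flatten (nseq (k + K) y)) = ((k + K) * size y)%N by exact: size_rep.
  rewrite /pump !size_cat hs. nia.
lia.
Qed.
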